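(* There is an absolute constant $D>0$ such that for every prime power $q$, every positive integer $n$, and every $A\in\Lambda(n,\mathbb{F}_q)$ with $\mathrm{rank}(A)>\frac23 n$, the number of isotropic spaces of $A$ (subspaces $U\le\mathbb{F}_q^n$ with $u^tAu'=0$ for all $u,u'\in U$) is at most $q^{\frac16 n^2+Dn}$.
   Context: $\Lambda(n,\mathbb{F}_q)$ is the space of $n\times n$ alternating matrices over $\mathbb{F}_q$. *)

(* Defs.v *)
From HB Require Import structures.
From mathcomp Require Import all_boot all_order all_algebra all_field.
Set Implicit Arguments. Unset Strict Implicit. Unset Printing Implicit Defensive.
Import GRing.Theory.
Local Open Scope ring_scope.

Definition alternating (F : fieldType) (n : nat) (A : 'M[F]_n) : bool :=
  [forall i, A i i == 0] && (A^T == - A).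

Definition is_subspace (F : finFieldType) (n : nat) (U : {set 'rV[F]_n}) : bool :=
  (0 \in U) && [forall u in U, forall v in U, forall a : F, (a *: u + v) \in U].

(* U is isotropic for A: u^t A u' = 0 for all u, u' in U (row-vector convention). *)
Definition isotropic (F : finFieldType) (n : nat) (A : 'M[F]_n)
    (U : {set 'rV[F]_n}) : bool :=
  [forall u in U, forall v in U, u *m A *m v^T == 0].

Definition num_isotropic (F : finFieldType) (n : nat) (A : 'M[F]_n) : nat :=
  #|[set U : {set 'rV[F]_n} | is_subspace U && isotropic A U]|.

(* Main.v *)
Require Import Defs.
From HB Require Import structures.
From mathcomp Require Import all_boot all_order all_algebra all_field.
From mathcomp Require Import zify.
Set Implicit Arguments. Unset Strict Implicit. Unset Printing Implicit Defensive.
Import GRing.Theory.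
Local Open Scope ring_scope.

Section Counting.
Variable F : finFieldType.
Local Notation q := #|F|.

Lemma q_gt1 : (1 < q)%N.
Proof.
rewrite (cardD1 (0:F)) (cardD1 (1:F)) !inE oner_eq0 /=. by [].
Qed.

Lemma card_submx m s n (K : 'M[F]_(m,n)) :
  #|[set X : 'M[F]_(s,n) | (X <= K)%MS]| = (q ^ (s * \rank K))%N.
Proof.
have -> : [set X : 'M[F]_(s,n) | (X <= K)%MS] =
    (fun W : 'M_(s, \rank K) => W *m row_base K) @: setT.
  apply/setP => X; rewrite inE; apply/idP/imsetP.
  - rewrite -(eq_row_base K) => /submxP [W ->]; by exists W.
  - by case=> W _ ->; rewrite -(eq_row_base K) submxMl.
rewrite card_in_imset ?cardsT ?card_mx //.
by move=> W1 W2 _ _; exact: (row_free_inj (row_base_free K)).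
Qed.

Lemma card_ker s n p (B : 'M[F]_(n,p)) :
  #|[set X : 'M[F]_(s,n) | X *m B == 0]| = (q ^ (s * (n - \rank B)))%N.
Proof.
rewrite -mxrank_ker -card_submx; apply: eq_card => X; by rewrite !inE sub_kermx.
Qed.

Lemma bin2_double N : (2 * 'C(N, 2))%N = (N * N.-1)%N.
Proof.
elim: N => [//|N IH]; rewrite binS bin1 mulnDr IH; case: N {IH} => //= N; lia.
Qed.

Lemma prod_lb N : (q ^ 'C(N, 2) <= \prod_(1 <= i < N.+1) (q ^ i - 1))%N.
Proof.
elim: N => [|N IH]; first by rewrite big_geq.
rewrite big_nat_recr //= binS bin1 expnD leq_mul //.
have := q_gt1; move: q => Q hQ.
rewrite expnS; have : (0 < Q ^ N)%N by rewrite expn_gt0; lia.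
nia.
Qed.

Lemma card_unitmx m : (q ^ (m * m.-1) <= #|[set g : 'M[F]_m | g \in unitmx]|)%N.
Proof.
case: m => [|m].
  rewrite card_gt0; apply/set0Pn; exists 1%:M; by rewrite inE unitmx1.
have := card_GL F (ltn0Sn m).
rewrite cardsT /= card_sub => E.
have -> : #|[set g : 'M[F]_m.+1 | g \in unitmx]| = #|[pred A : 'M[F]_m.+1 | A \is a GRing.unit]|.
  by apply: eq_card => g; rewrite inE.
rewrite E /= -bin2_double mul2n -addnn expnD leq_mul //; exact: prod_lb.
Qed.


Lemma sum_card_pair (T1 T2 : finType) (P : pred T1) (Q : T1 -> pred T2) :
  #|[set p : T1 * T2 | P p.1 && Q p.1 p.2]| = (\sum_(a | P a) #|[set b | Q a b]|)%N.
Proof.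
rewrite -sum1_card.
transitivity (\sum_(p | P p.1 && Q p.1 p.2) 1)%N; first by apply: eq_bigl => p; rewrite inE.
rewrite -(pair_big_dep P Q (fun _ _ => 1%N)).
by apply: eq_bigr => a _; rewrite -sum1_card; apply: eq_bigl => b; rewrite inE.
Qed.

Variables (n : nat) (A : 'M[F]_n).
Hypothesis trA : A^T = - A.

Definition goodY j (Y : 'M[F]_(j,n)) := (Y *m A *m Y^T == 0) && (\rank (Y *m A) == j).

Lemma card_goodY j : (#|[set Y : 'M[F]_(j,n) | goodY Y]| <= q ^ (\sum_(i < j) (n - i)))%N.
Proof.
elim: j => [|j IH].
  by rewrite big_ord0 expn0 (leq_trans (max_card _)) // card_mx.
pose P2 := [set p : 'M[F]_(j,n) * 'M[F]_(1,n) | goodY p.1 && (p.2 *m (A *m p.1^T) == 0)].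
have le1 : (#|[set Y : 'M[F]_(1 + j,n) | goodY Y]| <= #|P2|)%N.
  rewrite -(card_in_imset (f := fun Y : 'M[F]_(1 + j, n) => (dsubmx Y, usubmx Y))); last first.
    move=> Y1 Y2 _ _ [e1 e2]; by rewrite -(vsubmxK Y1) -(vsubmxK Y2) e1 e2.
  apply: subset_leq_card; apply/subsetP => p /imsetP [Y]; rewrite inE => gY ->.
  rewrite inE /=; move: gY; rewrite /goodY -{1 2 3}(vsubmxK Y).
  move: (usubmx Y) (dsubmx Y) => u D.
  rewrite mul_col_mx tr_col_mx mul_col_row => /andP [/eqP E /eqP R].
  have := E; rewrite -block_mx0 => /eq_block_mx [_ E2 _ E4].
  rewrite E4 eqxx mulmxA E2 eqxx andbT /=.
  move: (mxrank_adds_leqif (u *m A) (D *m A)) => [+ _].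
  rewrite addsmxE R.
  have := rank_leq_row (u *m A); have := rank_leq_row (D *m A).
  move=> h1 h2 h3; apply/eqP; apply/eqP; rewrite eqn_leq h1 /= -(leq_add2l 1).
  exact: (leq_trans h3 (leq_add h2 (leqnn _))).
apply: (leq_trans le1); rewrite /P2 (sum_card_pair (@goodY j) (fun D u => u *m (A *m D^T) == 0)).
apply: (@leq_trans (\sum_(a | goodY a) (q ^ (n - j))%N)).
  apply: leq_sum => D /andP [_ /eqP R]; rewrite card_ker mul1n.
  rewrite -mxrank_tr trmx_mul trmxK trA mulmxN.
  by rewrite mxrank_opp R.
rewrite sum_nat_const big_ord_recr /= expnD leq_mul //.
by apply: leq_trans IH; rewrite cardsE.
Qed.

Definition spanset m (M : 'M[F]_(m,n)) : {set 'rV[F]_n} := [set v | (v <= M)%MS].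

Lemma subspaceP (U : {set 'rV[F]_n}) : is_subspace U ->
  forall u v a, u \in U -> v \in U -> a *: u + v \in U.
Proof.
move=> /andP [_ /forallP Ucl] u v a uU vU.
by move: (Ucl u); rewrite uU /= => /forallP /(_ v); rewrite vU /= => /forallP /(_ a).
Qed.

Lemma bil_entry m1 m2 (X : 'M[F]_(m1,n)) (Y : 'M[F]_(m2,n)) i l :
  (X *m A *m Y^T) i l = (row i X *m A *m (row l Y)^T) 0 0.
Proof.
rewrite !mxE; apply: eq_bigr => k _; rewrite !mxE; congr (_ * _).
by apply: eq_bigr => t _; rewrite !mxE.
Qed.

Lemma subspace_mx (U : {set 'rV[F]_n}) : is_subspace U -> isotropic A U ->
  exists m (M : 'M[F]_(m,n)), spanset M = U /\ M *m A *m M^T = 0.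
Proof.
move=> sU iso; have U0 : 0 \in U by case/andP: sU.
have add_U u v : u \in U -> v \in U -> u + v \in U.
  by move=> uU vU; have := subspaceP sU 1 uU vU; rewrite scale1r.
have scal_U u a : u \in U -> a *: u \in U.
  by move=> uU; have := subspaceP sU a uU U0; rewrite addr0.
pose f (i : 'I_#|{: 'rV[F]_n}|) : 'rV[F]_n := if enum_val i \in U then enum_val i else 0.
pose M := \matrix_i f i.
have rowM i : row i M \in U by rewrite rowK /f; case: ifP.
exists _, M; split.
  apply/setP => v; rewrite inE; apply/idP/idP.
    case/submxP => W ->; rewrite mulmx_sum_row.
    elim/big_ind: _ => [//|x y|i _]; first exact: add_U.
    exact: scal_U.
  move=> vU; have -> : v = row (enum_rank v) M by rewrite rowK /f enum_rankK vU.
  exact: row_sub.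
apply/matrixP => i l; rewrite bil_entry.
move: iso => /forallP /(_ (row i M)); rewrite rowM /= => /forallP /(_ (row l M)).
by rewrite rowM /= => /eqP ->; rewrite !mxE.
Qed.


Definition good s j (U : {set 'rV[F]_n}) (p : 'M[F]_(s,n) * 'M[F]_(j,n)) :=
  [&& p.1 *m A == 0, goodY p.2, row_free (col_mx p.1 p.2),
      U == spanset (col_mx p.1 p.2), (s <= \rank (kermx A))%N & (j <= n)%N].

Definition S s j := [set U | [exists p : 'M[F]_(s,n) * 'M[F]_(j,n), good U p]].

Lemma exists_good (U : {set 'rV[F]_n}) : is_subspace U -> isotropic A U ->
  exists s j, [&& (s <= n)%N, (j <= n)%N & U \in S s j].
Proof.
move=> sU iU; have [m [M [sM iso]]] := subspace_mx sU iU.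
set K := kermx A; set C := (M :&: K)%MS; set Dm := (M :\: K)%MS.
exists (\rank C), (\rank Dm); rewrite !rank_leq_col /= inE.
apply/existsP; exists (row_base C, row_base Dm); rewrite /good /=.
have DK : (Dm :&: K)%MS = 0 by apply: capmx_diff.
have CD : (C :&: Dm)%MS = 0.
  apply/eqP; rewrite -submx0 -DK capmxC capmxS ?capmxSr //.
have eqM : (col_mx (row_base C) (row_base Dm) :=: M)%MS.
  apply: eqmx_trans (eqmx_sym (addsmxE _ _)) _.
  apply: eqmx_trans (adds_eqmx (eq_row_base C) (eq_row_base Dm)) _.
  by rewrite addsmxC; apply: addsmx_diff_cap_eq.
apply/and5P; split.
- by rewrite -sub_kermx eq_row_base capmxSr.
- apply/andP; split.
    have /submxP [W ->] : (row_base Dm <= M)%MS by rewrite eq_row_base diffmxSl.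
    by rewrite trmx_mul !mulmxA -(mulmxA W) -(mulmxA W) iso mulmx0 mul0mx.
  apply/eqP; apply: etrans (_ : _ = \rank (row_base Dm)) _; last by rewrite eq_row_base.
  apply/mxrank_injP; rewrite -submx0 -DK capmxS ?eq_row_base //.
- by rewrite /row_free eqM -(mxrank_cap_compl M K).
- by rewrite -sM; apply/eqP/setP => v; rewrite !inE eqM.
- by rewrite mxrankS ?capmxSr ?rank_leq_col.
Qed.


Lemma YAX0 s j (X0 : 'M[F]_(s,n)) (Y : 'M[F]_(j,n)) : X0 *m A = 0 -> Y *m A *m X0^T = 0.
Proof.
move=> X0A; apply: trmx_inj; rewrite trmx0 !trmx_mul trmxK trA.
by rewrite mulNmx mulmxN mulmxA X0A mul0mx oppr0.
Qed.

Lemma unit_eqmx m p (g : 'M[F]_m) (B : 'M[F]_(m,p)) : g \in unitmx -> (g *m B :=: B)%MS.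
Proof. by move=> gu; apply: eqmxMfull; rewrite row_full_unit. Qed.

Lemma phi_T s j (X0 : 'M[F]_(s,n)) (Y0 : 'M[F]_(j,n)) (g1 : 'M[F]_s) g2 (g3 : 'M[F]_j) :
  X0 *m A = 0 -> goodY Y0 -> g3 \in unitmx ->
  (g1 *m X0) *m A = 0 /\ goodY (g2 *m X0 + g3 *m Y0).
Proof.
move=> X0A /andP [/eqP Y0iso /eqP rY0] g3u; split; first by rewrite -mulmxA X0A mulmx0.
have YA : (g2 *m X0 + g3 *m Y0) *m A = g3 *m (Y0 *m A).
  by rewrite mulmxDl -!mulmxA X0A mulmx0 add0r.
apply/andP; split.
  rewrite YA linearD /= mulmxDr !trmx_mul !mulmxA -!(mulmxA g3 Y0 A) -!(mulmxA g3 (Y0 *m A)) YAX0 // Y0iso.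
  by rewrite !mulmx0 !mul0mx addr0.
by rewrite YA (unit_eqmx _ g3u) rY0.
Qed.


Lemma span_block s j (X0 : 'M[F]_(s,n)) (Y0 : 'M[F]_(j,n)) (g1 : 'M[F]_s) g2 (g3 : 'M[F]_j) :
  g1 \in unitmx -> g3 \in unitmx ->
  spanset (col_mx (g1 *m X0) (g2 *m X0 + g3 *m Y0)) = spanset (col_mx X0 Y0).
Proof.
move=> g1u g3u.
have -> : col_mx (g1 *m X0) (g2 *m X0 + g3 *m Y0) = block_mx g1 0 g2 g3 *m col_mx X0 Y0.
  by rewrite mul_block_col mul0mx addr0.
have bu : block_mx g1 0 g2 g3 \in unitmx.
  by rewrite unitmxE det_lblock unitrM -!unitmxE g1u g3u.
by apply/setP => v; rewrite !inE (unit_eqmx _ bu).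
Qed.

Lemma card_S s j :
  (#|S s j| * q ^ (s * s.-1) * q ^ (j * s) * q ^ (j * j.-1) <=
     q ^ (s * (n - \rank A)) * q ^ (\sum_(i < j) (n - i)))%N.
Proof.
pose pk U := odflt (0,0) [pick p : 'M[F]_(s,n) * 'M[F]_(j,n) | good U p].
have pkP U : U \in S s j -> good U (pk U).
  rewrite inE => /existsP [p gp]; rewrite /pk; case: pickP => [p' -> //|/(_ p)].
  by rewrite gp.
pose Is := [set g : 'M[F]_s | g \in unitmx]; pose Ij := [set g : 'M[F]_j | g \in unitmx].
pose Dom := setX (setX (setX (S s j) Is) [set: 'M[F]_(j,s)]) Ij.
pose Phi (x : {set 'rV[F]_n} * 'M[F]_s * 'M[F]_(j,s) * 'M[F]_j) :=
  (x.1.1.2 *m (pk x.1.1.1).1, x.1.2 *m (pk x.1.1.1).1 + x.2 *m (pk x.1.1.1).2).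
pose T := [set p : 'M[F]_(s,n) * 'M[F]_(j,n) | (p.1 *m A == 0) && goodY p.2].
have h1 : (#|S s j| * q ^ (s * s.-1) * q ^ (j * s) * q ^ (j * j.-1) <= #|Dom|)%N.
  rewrite !cardsX cardsT card_mx.
  by rewrite !leq_mul ?card_unitmx.
have h2 : (#|Dom| <= #|T|)%N.
  rewrite -(card_in_imset (f := Phi)).
    apply: subset_leq_card; apply/subsetP => p /imsetP [[[[U g1] g2] g3]].
    rewrite !in_setX /= => /andP [/andP [/andP [US g1u] _] g3u] ->.
    rewrite inE in g3u.
    have /and5P [/eqP X0A gY _ _ _] := pkP U US.
    rewrite inE /=; have [-> ->] := phi_T g1 g2 X0A gY g3u.
    by rewrite eqxx.
  move=> [[[U g1] g2] g3] [[[U' g1'] g2'] g3'].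
  rewrite !in_setX /= => /andP [/andP [/andP [US g1u] _] g3u] /andP [/andP [/andP [US' g1u'] _] g3u'].
  rewrite !inE in g1u g3u g1u' g3u'.
  rewrite /Phi /= => [[E1 E2]].
  have eU : U = U'.
    have /and5P [_ _ _ /eqP eU /andP [_ _]] := pkP U US.
    have /and5P [_ _ _ /eqP eU' /andP [_ _]] := pkP U' US'.
    by rewrite eU eU' -(span_block _ _ g2 g1u g3u) -(span_block _ _ g2' g1u' g3u') E1 E2.
  subst U'.
  have /and5P [_ _ rf _ _] := pkP U US.
  move: E1 E2 rf; case: (pk U) => X0 Y0 /= E1 E2 rf.
  have e1 : row_mx g1 (0 : 'M[F]_(s,j)) = row_mx g1' 0.
    apply: (row_free_inj rf) => /=; by rewrite !mul_row_col !mul0mx !addr0.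
  have e2 : row_mx g2 g3 = row_mx g2' g3'.
    apply: (row_free_inj rf) => /=; by rewrite !mul_row_col.
  case: (eq_row_mx e1) => -> _; by case: (eq_row_mx e2) => -> ->.
have h3 : (#|T| <= q ^ (s * (n - \rank A)) * q ^ (\sum_(i < j) (n - i)))%N.
  rewrite -(card_ker s A).
  apply: (@leq_trans #|setX [set X : 'M[F]_(s,n) | X *m A == 0] [set Y : 'M[F]_(j,n) | goodY Y]|).
    by apply: subset_leq_card; apply/subsetP => p; rewrite !inE.
  by rewrite cardsX leq_mul ?card_goodY.
exact: leq_trans h1 (leq_trans h2 h3).
Qed.


Lemma S_dims s j U : U \in S s j -> (s <= n - \rank A)%N && (j <= n)%N.
Proof.
by rewrite inE => /existsP [p /and5P [_ _ _ _ /andP [h1 ->]]]; rewrite -mxrank_ker h1.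
Qed.

End Counting.

Lemma sum_formula n j : (j <= n)%N -> (2 * \sum_(i < j) (n - i) + j * (j - 1) = 2 * j * n)%N.
Proof.
elim: j => [|j IH] hj; first by rewrite big_ord0.
rewrite big_ord_recr /= mulnDr.
move: (IH (ltnW hj)). move: (\sum_(i < j) (n - i))%N => X. nia.
Qed.

From Stdlib Require ZArith.

Lemma key_ineq n s j : (2 * n * s + 6 * n * j <= n * n + 6 * s * s + 9 * j * j + 6 * s * j)%N.
Proof.
have h := BinInt.Z.square_nonneg (BinInt.Z.sub (BinInt.Z.sub (BinInt.Z.of_nat n) (BinInt.Z.of_nat s)) (BinInt.Z.mul (BinInt.Z.of_nat 3) (BinInt.Z.of_nat j))).
lia.
Qed.

Lemma arith n d s j S0 :
  (3 * d < n)%N -> (s <= d)%N -> (j <= n)%N ->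
  (2 * S0 + j * (j - 1) = 2 * j * n)%N ->
  (6 * (s * d + S0) <= n * n + 12 * n + 6 * (s * s.-1 + j * s + j * j.-1))%N.
Proof.
move=> h1 h2 h3 h4.
have key := key_ineq n s j.
have f1 : (s * s.-1 + s = s * s)%N by case: s {h2 key} => //= s; rewrite mulnS addnC.
have f2 : (j * j.-1 + j = j * j)%N by case: j {h3 h4 key} => //= j; rewrite mulnS addnC.
have f2' : (j * (j - 1) = j * j.-1)%N by rewrite subn1.
have f3 : (3 * (s * d) <= s * n)%N by rewrite mulnCA leq_mul2l ltnW ?orbT.
lia.
Qed.

Lemma per_bound (F : finFieldType) n (A : 'M[F]_n) (trA : A^T = - A) s j :
  (2 * n < 3 * \rank A)%N ->
  (#|S A s j| <= #|F| ^ ((n * n + 12 * n) %/ 6))%N.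
Proof.
move=> hr.
case: (set_0Vmem (S A s j)) => [-> | [U US]]; first by rewrite cards0.
have /andP [hs hj] := S_dims US.
have := card_S trA s j.
rewrite -!mulnA -!expnD => h.
have hq := q_gt1 F.
set a := (s * s.-1 + (j * s + j * j.-1))%N in h.
set b := (s * (n - \rank A) + \sum_(i < j) (n - i))%N in h.
have S1 : (0 < #|S A s j|)%N by rewrite card_gt0; apply/set0Pn; exists U.
have ha : (a <= b)%N.
  rewrite -(leq_exp2l _ _ hq); apply: leq_trans h.
  by rewrite leq_pmull.
have hS : (#|S A s j| <= #|F| ^ (b - a))%N.
  have qa : (0 < #|F| ^ a)%N by rewrite expn_gt0 (ltnW hq).
  by rewrite -(leq_pmul2r qa) -expnD subnK.
apply: (leq_trans hS); rewrite leq_exp2l // leq_divRL //.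
have hrn : (\rank A <= n)%N by apply: rank_leq_col.
have h3 : (3 * (n - \rank A) < n)%N by lia.
have := arith h3 hs hj (sum_formula hj).
rewrite /a /b; lia.
Qed.

Lemma nat_bound (F : finFieldType) n (A : 'M[F]_n) :
  alternating A -> (2 * n < 3 * \rank A)%N ->
  (num_isotropic A <= #|F| ^ ((n * n + 12 * n) %/ 6 + 2 * n))%N.
Proof.
move=> /andP [_ /eqP trA] hr.
set E := ((n * n + 12 * n) %/ 6)%N.
set I := [set U : {set 'rV[F]_n} | is_subspace U && isotropic A U].
have step1 : (#|I| <= \sum_(p : 'I_n.+1 * 'I_n.+1) #|S A p.1 p.2|)%N.
  rewrite -sum1_card.
  apply: (@leq_trans (\sum_(U in I) \sum_(p : 'I_n.+1 * 'I_n.+1) (U \in S A p.1 p.2 : nat))).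
    apply: leq_sum => U; rewrite inE => /andP [sU iU].
    have [s [j /and3P [hs hj US]]] := exists_good sU iU.
    rewrite (bigD1 (inord s, inord j)) //= !inordK ?ltnS // US.
    by rewrite leq_addr.
  rewrite exchange_big /=; apply: leq_sum => p _.
  rewrite -sum1_card big_mkcond /= [X in (_ <= X)%N]big_mkcond /=.
  by apply: leq_sum => U _; case: (U \in I); case: (U \in S A p.1 p.2).
apply: (leq_trans step1).
apply: (@leq_trans (\sum_(p : 'I_n.+1 * 'I_n.+1) #|F| ^ E)%N).
  by apply: leq_sum => p _; apply: per_bound.
rewrite sum_nat_const card_prod card_ord expnD mulnC leq_mul //.
have hq := q_gt1 F; have := ltn_expl n hq => h.
by rewrite mul2n -addnn expnD leq_mul.
Qed.

Local Close Scope ring_scope.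
From Stdlib Require Import Reals Lra.

Lemma INR_expn a k : INR (expn a k) = (INR a ^ k)%R.
Proof.
elim: k => [|k IH]; first by rewrite expn0.
by rewrite expnS -multE mult_INR IH.
Qed.

Theorem lemma7p6 :
  exists D : R, (0 < D)%R /\
    forall (F : finFieldType) (n : nat) (A : 'M[F]_n),
      (0 < n)%N -> alternating A -> (2 * n < 3 * \rank A)%N ->
      (INR (num_isotropic A) <=
         Rpower (INR #|F|) (INR n ^ 2 / 6 + D * INR n))%R.
Proof.
exists 4%R; split; first lra.
move=> F n A hn alt hr.
have hb := nat_bound alt hr.
move: hb; set E := ((n * n + 12 * n) %/ 6)%N => hb.
have hq := q_gt1 F.
have q1 : (1 <= INR #|F|)%R.
  have := le_INR 1 #|F|; rewrite /= => h; apply: h; apply/leP; exact: ltnW.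
have hE : leq (muln E 6) (addn (muln n n) (muln 12 n)) by apply: leq_trunc_div.
have hE' := le_INR _ _ (elimT leP hE).
rewrite -!multE -!plusE !mult_INR !plus_INR !mult_INR in hE'.
apply: Rle_trans (_ : INR (num_isotropic A) <= INR (expn #|F| (addn E (muln 2 n))))%R _.
  by apply: le_INR; apply/leP.
rewrite INR_expn -Rpower_pow; last lra.
apply: Rle_Rpower => //.
rewrite -plusE -multE plus_INR mult_INR.
have e6 : INR 6 = 6%R by simpl; lra.
have e12 : INR 12 = 12%R by simpl; lra.
have e2 : INR 2 = 2%R by simpl; lra.
rewrite e6 INR_0 in hE'; rewrite e2 /=.
lra.
Qed.
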